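(* Let $G$ be a simple stochastic game and $\sigma$ a positional MAX strategy. There exists a positional best response $\tau$ to $\sigma$ such that for every positional MIN strategy $\tau'$ we have $Z(\sigma,\tau')\subseteq Z(\sigma,\tau)$.
   Context: A simple stochastic game (SSG) $G$ is a finite directed graph whose vertex set $V$ is partitioned into MAX vertices, MIN vertices, random vertices and a nonempty set $V_S$ of sinks; every non-sink vertex has at least one outgoing arc, every sink has exactly one outgoing arc, a self-loop; each random vertex $x$ carries a rational probability distribution $p_x$ on its out-neighbourhood, positive on every out-neighbour; each sink $s$ has rational value $\mathrm{Val}(s)\in[0,1]$. A positional MAX (resp. MIN) strategy assigns to each MAX (resp. MIN) vertex one of its out-neighbours. Under $\sigma,\tau$ from start $x_0$, the random play moves from MAX vertex $x$ to $\sigma(x)$, from MIN vertex $x$ to $\tau(x)$, from random vertex $x$ to an out-neighbour drawn by $p_x$ independently, and stays at a sink once reached; its value is $\mathrm{Val}(s)$ if it reaches sink $s$, else $0$, and $v_{\sigma,\tau}(x_0)$ is its expectation. A best response to $\sigma$ is a MIN strategy $\tau$ with $v_{\sigma,\tau}\le v_{\sigma,\tau'}$ pointwise for all MIN strategies $\tau'$. An absorbing set for $(\sigma,\tau)$ is a set $Z\subseteq V\setminus V_S$ such that, starting from any vertex of $Z$ and playing according to $(\sigma,\tau)$, the probability of ever reaching a vertex of $V\setminus Z$ is zero. $Z(\sigma,\tau)$ denotes the union of all absorbing sets for $(\sigma,\tau)$. *)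

(* Defs.v *)
From HB Require Import structures.
From mathcomp Require Import all_boot all_order all_algebra.
From mathcomp Require Import all_classical all_reals all_analysis.
Set Implicit Arguments. Unset Strict Implicit. Unset Printing Implicit Defensive.
Import Order.TTheory GRing.Theory Num.Theory.
Import numFieldNormedType.Exports.
Local Open Scope ring_scope.

Inductive vkind := VMax | VMin | VRand | VSink.

Definition is_sinkk (k : vkind) : bool := if k is VSink then true else false.

Record ssg (R : realType) (V : finType) := SSG {
  kind : V -> vkind;
  arc : rel V;
  prob : V -> V -> R;
  sval : V -> R;
  sinks_nonempty : exists s, kind s = VSink;
  out_nonempty : forall x, kind x <> VSink -> exists y, arc x y;
  sink_selfloop : forall s, kind s = VSink -> forall y, arc s y = (y == s);
  prob_support : forall x, kind x = VRand -> forall y,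
      (arc x y -> 0 < prob x y) /\ (~~ arc x y -> prob x y = 0);
  prob_sum1 : forall x, kind x = VRand -> \sum_(y : V) prob x y = 1;
  prob_rat : forall x, kind x = VRand -> forall y, exists q : rat, prob x y = ratr q;
  sval_range : forall s, kind s = VSink -> 0 <= sval s <= 1;
  sval_rat : forall s, kind s = VSink -> exists q : rat, sval s = ratr q
}.

Section Game.
Variables (R : realType) (V : finType) (G : ssg R V).

Definition is_sink (x : V) : bool := is_sinkk (kind G x).

(** Positional strategies (only the values on the player's own vertices matter). *)
Definition max_strategy (sigma : V -> V) : Prop :=
  forall x, kind G x = VMax -> arc G x (sigma x).
Definition min_strategy (tau : V -> V) : Prop :=
  forall x, kind G x = VMin -> arc G x (tau x).

Definition trans (sigma tau : V -> V) (x y : V) : R :=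
  match kind G x with
  | VMax => (sigma x == y)%:R
  | VMin => (tau x == y)%:R
  | VRand => prob G x y
  | VSink => (x == y)%:R
  end.

Fixpoint nstep (sigma tau : V -> V) (n : nat) (x y : V) : R :=
  match n with
  | 0 => (x == y)%:R
  | n'.+1 => \sum_(z : V) trans sigma tau x z * nstep sigma tau n' z y
  end.

(** v_{sigma,tau}(x0): expected payoff = sum over sinks s of Val(s) times the
    probability of ever reaching s; since sinks are absorbing, the latter is
    the limit of the probability of being at s after n steps. *)
Definition value (sigma tau : V -> V) (x0 : V) : R :=
  limn (fun n => \sum_(s : V | is_sink s) sval G s * nstep sigma tau n x0 s).

Definition best_response (sigma tau : V -> V) : Prop :=
  min_strategy tau /\
  forall tau', min_strategy tau' -> forall x, value sigma tau x <= value sigma tau' x.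

Fixpoint hit_within (sigma tau : V -> V) (A : {set V}) (n : nat) (x : V) : R :=
  match n with
  | 0 => (x \in A)%:R
  | n'.+1 => if x \in A then 1
             else \sum_(z : V) trans sigma tau x z * hit_within sigma tau A n' z
  end.

Definition hit_prob (sigma tau : V -> V) (A : {set V}) (x : V) : R :=
  limn (fun n : nat => (hit_within sigma tau A n x : R^o)).

Definition absorbing (sigma tau : V -> V) (Z : {set V}) : Prop :=
  (forall x, x \in Z -> ~~ is_sink x) /\
  forall x, x \in Z -> hit_prob sigma tau (~: Z) x = 0.

Definition Zunion (sigma tau : V -> V) : {set V} :=
  [set x | `[< exists Z : {set V}, absorbing sigma tau Z /\ x \in Z >] ].

End Game.

(* Main.v *)
Require Import Defs.
From HB Require Import structures.
From mathcomp Require Import all_boot all_order all_algebra.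
From mathcomp Require Import all_classical all_reals all_analysis.
Import Order.TTheory GRing.Theory Num.Theory.
Import numFieldNormedType.Exports.
Local Open Scope ring_scope.

Set Implicit Arguments. Unset Strict Implicit. Unset Printing Implicit Defensive.

Section S.
Variables (R : realType) (V : finType) (G : ssg R V) (sigma : V -> V).

Local Notation tr := (Defs.trans G sigma).

Definition Top (tau : V -> V) (m : V -> R) x := \sum_z tr tau x z * m z.
Definition uu tau n x := \sum_(s | is_sink G s) Defs.sval G s * nstep G sigma tau n x s.

Lemma sinkP s : is_sink G s -> kind G s = VSink.
Proof. by rewrite /is_sink; case: (kind G s). Qed.

Lemma trans_ge0 tau x y : 0 <= tr tau x y.
Proof.
rewrite /Defs.trans; case E: (kind G x) => //.
have [H1 H2] := prob_support E y.
by case: (boolP (Defs.arc G x y)) => h; [apply/ltW/H1 | rewrite H2].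
Qed.

Lemma sum_delta (a : V) (f : V -> R) : \sum_y (a == y)%:R * f y = f a.
Proof.
rewrite (bigD1 a) //= eqxx mul1r big1 ?addr0 // => y hy.
by rewrite eq_sym (negbTE hy) mul0r.
Qed.

Lemma trans_sum1 tau x : \sum_y tr tau x y = 1.
Proof.
have h (a : V) : \sum_(y : V) (a == y)%:R = 1 :> R.
  by rewrite -[RHS](sum_delta a (fun _ => 1)); apply: eq_bigr => y _; rewrite mulr1.
rewrite /Defs.trans; case E: (kind G x) => //; exact: prob_sum1.
Qed.

Lemma T_mono tau m1 m2 : (forall z, m1 z <= m2 z) -> forall x, Top tau m1 x <= Top tau m2 x.
Proof. by move=> h x; apply: ler_sum => z _; apply: ler_wpM2l; [apply: trans_ge0|]. Qed.

Lemma uS tau n x : uu tau n.+1 x = Top tau (uu tau n) x.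
Proof.
rewrite /uu /Top /=.
under eq_bigr do rewrite mulr_sumr.
rewrite exchange_big /=; apply: eq_bigr => z _.
rewrite mulr_sumr; apply: eq_bigr => s _.
by rewrite mulrCA.
Qed.

Lemma u0 tau x : uu tau 0 x = if is_sink G x then Defs.sval G x else 0.
Proof.
rewrite /uu /= big_mkcond (bigD1 x) //= eqxx mulr1 big1 ?addr0.
  by case: ifP.
move=> s hs; rewrite eq_sym (negbTE hs) mulr0; by case: ifP.
Qed.

Lemma sval_ge0 s : is_sink G s -> 0 <= Defs.sval G s.
Proof. by move=> /sinkP /sval_range /andP[]. Qed.
Lemma sval_le1 s : is_sink G s -> Defs.sval G s <= 1.
Proof. by move=> /sinkP /sval_range /andP[]. Qed.

Lemma u_bounds tau n x : 0 <= uu tau n x <= 1.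
Proof.
elim: n x => [|n IH] x.
  rewrite u0; case: ifP => h; last by rewrite lexx ler01.
  by rewrite sval_ge0 // sval_le1.
rewrite uS; apply/andP; split.
  by apply: sumr_ge0 => z _; apply: mulr_ge0; [apply: trans_ge0 | case/andP: (IH z)].
apply: (@le_trans _ _ (Top tau (fun _ => 1) x)).
  by apply: T_mono => z; case/andP: (IH z).
rewrite /Top; under eq_bigr do rewrite mulr1; by rewrite trans_sum1.
Qed.

Lemma trans_sink tau x z : is_sink G x -> tr tau x z = (x == z)%:R.
Proof. by move=> /sinkP h; rewrite /Defs.trans h. Qed.

Lemma u_mono tau n x : uu tau n x <= uu tau n.+1 x.
Proof.
elim: n x => [|n IH] x.
  rewrite uS /Top; case: (boolP (is_sink G x)) => hx.
    under eq_bigr do rewrite trans_sink //.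
    by rewrite sum_delta.
  rewrite u0 (negbTE hx).
  by apply: sumr_ge0 => z _; apply: mulr_ge0; [apply: trans_ge0 | case/andP: (u_bounds tau 0 z)].
by rewrite (uS _ n.+1) uS; apply: T_mono.
Qed.

Lemma u_nd tau x : nondecreasing_seq (fun n => uu tau n x).
Proof. by apply/nondecreasing_seqP => n; apply: u_mono. Qed.

Lemma u_cvg tau x : cvgn (fun n => uu tau n x).
Proof.
apply: nondecreasing_is_cvgn; first exact: u_nd.
by exists 1 => _ [n _ <-]; case/andP: (u_bounds tau n x).
Qed.

Local Notation val := (Defs.value G sigma).

Lemma u_le_value tau n x : uu tau n x <= val tau x.
Proof. exact: (nondecreasing_cvgn_le (@u_nd tau x) (@u_cvg tau x) n). Qed.

Lemma value_le tau x c : (forall n, uu tau n x <= c) -> val tau x <= c.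
Proof. by move=> h; apply: limr_le; [exact: (@u_cvg tau x) | apply: nearW]. Qed.

Lemma value_ge0 tau x : 0 <= val tau x.
Proof. by apply: le_trans (u_le_value tau 0 x); case/andP: (u_bounds tau 0 x). Qed.

Lemma value_sink tau s : is_sink G s -> Defs.sval G s <= val tau s.
Proof. by move=> hs; have := u_le_value tau 0 s; rewrite u0 hs. Qed.

Lemma cvg_sumV (r : seq V) (f : V -> nat -> R) (g : V -> R) :
  (forall z, (fun n => f z n) @ \oo --> g z)%classic ->
  ((fun n => \sum_(z <- r) f z n) @ \oo --> \sum_(z <- r) g z)%classic.
Proof.
move=> h; elim: r => [|z r IH].
  rewrite big_nil; under eq_cvg do rewrite big_nil; exact: cvg_cst.
rewrite big_cons; under eq_cvg do rewrite big_cons.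
exact: cvgD.
Qed.

Lemma value_fix tau x : val tau x = Top tau (val tau) x.
Proof.
have h1 : ((fun n => uu tau n.+1 x) @ \oo --> val tau x)%classic.
  by rewrite (cvg_shiftS (fun n => uu tau n x)); exact: (@u_cvg tau x).
have h2 : ((fun n => uu tau n.+1 x) @ \oo --> Top tau (val tau) x)%classic.
  have -> : (fun n => uu tau n.+1 x) = (fun n => Top tau (uu tau n) x).
    by apply: funext => n; exact: uS.
  rewrite /Top; apply: (@cvg_sumV _ (fun z n => tr tau x z * uu tau n z) (fun z => tr tau x z * val tau z)) => z.
  exact: (cvgMl_tmp (@u_cvg tau z)).
exact: (cvg_unique _ h1 h2).
Qed.


Lemma super_bound tau m : (forall z, 0 <= m z) ->
  (forall s, is_sink G s -> Defs.sval G s <= m s) ->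
  (forall x, Top tau m x <= m x) -> forall x, val tau x <= m x.
Proof.
move=> h0 hs hT x; apply: value_le => n; elim: n x => [|n IH] x.
  by rewrite u0; case: ifP => h; [apply: hs | apply: h0].
by rewrite uS; apply: le_trans (hT x); apply: T_mono.
Qed.

Lemma T_ext tau1 tau2 m x : (forall z, tr tau1 x z = tr tau2 x z) ->
  Top tau1 m x = Top tau2 m x.
Proof. by move=> h; apply: eq_bigr => z _; rewrite h. Qed.

Lemma T_le_value tau1 tau2 m x : (forall z, tr tau1 x z = tr tau2 x z) ->
  (forall z, m z <= val tau2 z) -> Top tau1 m x <= val tau2 x.
Proof.
by move=> h hm; rewrite (T_ext m h) [X in _ <= X]value_fix; apply: T_mono.
Qed.

Definition is_min (x : V) : bool := if kind G x is VMin then true else false.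

Lemma trans_same tau1 tau2 x z : ~~ is_min x -> tr tau1 x z = tr tau2 x z.
Proof. by rewrite /is_min /Defs.trans; case: (kind G x). Qed.

Lemma trans_eq tau1 tau2 x z : tau1 x = tau2 x -> tr tau1 x z = tr tau2 x z.
Proof. by move=> h; rewrite /Defs.trans h. Qed.

Lemma min_strategyP tau x : min_strategy G tau -> is_min x -> Defs.arc G x (tau x).
Proof. by move=> h; rewrite /is_min; case E: (kind G x) => // _; apply: h. Qed.

Definition minb (f : {ffun V -> V}) : bool := [forall x, is_min x ==> Defs.arc G x (f x)].

Lemma minbP (f : {ffun V -> V}) : minb f -> min_strategy G (fun y => f y).
Proof.
move=> /forallP h x hx; have := h x; rewrite /is_min hx /=; exact.
Qed.

Lemma minb_of (tau : V -> V) : min_strategy G tau -> minb [ffun y => tau y].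
Proof.
move=> h; apply/forallP => x; apply/implyP => hx; rewrite ffunE.
exact: min_strategyP.
Qed.

Definition Ssum (f : {ffun V -> V}) : R := \sum_x val (fun y => f y) x.

Lemma exists_min : exists f, minb f.
Proof.
exists [ffun x => odflt x [pick y | Defs.arc G x y]]; apply/forallP => x.
apply/implyP => hx; rewrite ffunE.
have : kind G x <> VSink by move: hx; rewrite /is_min; case: (kind G x).
move=> /out_nonempty [y hy].
case: pickP => [z hz //|h]; by rewrite h in hy.
Qed.

Lemma exists_best : exists tau, best_response G sigma tau.
Proof.
have [f0 hf0] := exists_min.
case: (arg_minP Ssum hf0) => fs hfs hmin.
exists (fun y => fs y); split; first exact: minbP.
move=> tau' htau' x; rewrite leNgt; apply/negP => hlt.
set vs := val (fun y => fs y).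
set vp := val tau'.
pose tau2 y := if is_min y && (vp y < vs y) then tau' y else fs y.
have mtau2 : min_strategy G tau2.
  move=> y hy; rewrite /tau2; case: ifP => _.
    by apply: htau'.
  by apply: (minbP hfs).
pose m z := Num.min (vs z) (vp z).
have bnd : forall z, val tau2 z <= m z.
  apply: super_bound.
  - by move=> z; rewrite le_min !value_ge0.
  - by move=> s hs; rewrite le_min !value_sink.
  move=> y; rewrite le_min; apply/andP; split.
  + case: (boolP (is_min y && (vp y < vs y))) => hc.
      apply: le_trans (ltW (proj2 (andP hc))).
      apply: T_le_value; last by move=> z; rewrite ge_min lexx orbT.
      by move=> z; apply: trans_eq; rewrite /tau2 hc.
    apply: T_le_value; last by move=> z; rewrite ge_min lexx.
    by move=> z; apply: trans_eq; rewrite /tau2 (negbTE hc).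
  + case: (boolP (is_min y)) => hy; last first.
      apply: T_le_value; last by move=> z; rewrite ge_min lexx orbT.
      by move=> z; apply: trans_same.
    case: (boolP (vp y < vs y)) => hc.
      apply: T_le_value; last by move=> z; rewrite ge_min lexx orbT.
      by move=> z; apply: trans_eq; rewrite /tau2 hy hc.
    have hle : vs y <= vp y by rewrite leNgt.
    apply: le_trans hle.
    apply: T_le_value; last by move=> z; rewrite ge_min lexx.
    by move=> z; apply: trans_eq; rewrite /tau2 hy (negbTE hc).
have h2 := hmin _ (minb_of mtau2).
have e2 : (fun y => [ffun y => tau2 y] y) = tau2 by apply: funext => y; rewrite ffunE.
move: h2; rewrite /Ssum e2 leNgt => /negP; apply.
rewrite [X in X < _](bigD1 x) // [X in _ < X](bigD1 x) //=.
apply: ltr_leD.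
  by apply: le_lt_trans (bnd x) (le_lt_trans _ hlt); rewrite /m ge_min lexx orbT.
by apply: ler_sum => z _; apply: le_trans (bnd z) _; rewrite /m ge_min lexx.
Qed.

Local Notation hw := (hit_within G sigma).

Lemma hw_bounds tau A n x : 0 <= hw tau A n x <= 1.
Proof.
elim: n x => [|n IH] x /=.
  by case: (x \in A); rewrite ?lexx ?ler01.
case: (x \in A); first by rewrite ler01 lexx.
apply/andP; split.
  by apply: sumr_ge0 => z _; apply: mulr_ge0; [apply: trans_ge0 | case/andP: (IH z)].
apply: (@le_trans _ _ (Top tau (fun _ => 1) x)).
  by apply: T_mono => z; case/andP: (IH z).
rewrite /Top; under eq_bigr do rewrite mulr1; by rewrite trans_sum1.
Qed.

Lemma hw_mono tau A n x : hw tau A n x <= hw tau A n.+1 x.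
Proof.
elim: n x => [|n IH] x /=.
  case: (x \in A) => //=.
  by apply: sumr_ge0 => z _; apply: mulr_ge0; [apply: trans_ge0 | case: (z \in A)].
case: (x \in A) => //.
by apply: ler_sum => z _; apply: ler_wpM2l; [apply: trans_ge0 | apply: IH].
Qed.

Lemma hw_le_prob tau A n x : hw tau A n x <= hit_prob G sigma tau A x.
Proof.
have nd : nondecreasing_seq (fun n => hw tau A n x).
  by apply/nondecreasing_seqP => k; apply: hw_mono.
have cv : cvgn (fun n => hw tau A n x).
  apply: nondecreasing_is_cvgn => //.
  by exists 1 => _ [k _ <-]; case/andP: (hw_bounds tau A k x).
exact: (nondecreasing_cvgn_le nd cv n).
Qed.

Lemma absorbing_closed tau Z z y : absorbing G sigma tau Z -> z \in Z ->
  tr tau z y != 0 -> y \in Z.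
Proof.
move=> [_ hZ] hz hy; apply/negPn/negP => hyZ.
have := hw_le_prob tau (~: Z) 1 z; rewrite hZ // /= inE hz /=.
apply/negP; rewrite -ltNge (bigD1 y) //= inE hyZ mulr1.
apply: (@lt_le_trans _ _ (tr tau z y)); last first.
  rewrite lerDl; apply: sumr_ge0 => w _; apply: mulr_ge0; first exact: trans_ge0.
  by case: (w \in ~: Z).
by rewrite lt_neqAle eq_sym hy trans_ge0.
Qed.
End S.
Theorem lemma20 (R : realType) (V : finType) (G : ssg R V) (sigma : V -> V) :
  max_strategy G sigma ->
  exists tau : V -> V, best_response G sigma tau /\
    forall tau' : V -> V, min_strategy G tau' ->
      Zunion G sigma tau' \subset Zunion G sigma tau.
Proof.
move=> _.
have [ts [hts_min hts_opt]] := exists_best G sigma.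
pose W := [set y | `[< exists t, min_strategy G t /\ y \in Zunion G sigma t >]].
pose pickt (y : V) : V -> V :=
  match pselect (exists t, min_strategy G t /\ y \in Zunion G sigma t) with
  | left h => proj1_sig (cid h) | right _ => ts end.
have pick_spec : forall y, y \in W ->
    min_strategy G (pickt y) /\ y \in Zunion G sigma (pickt y).
  move=> y hy; rewrite /pickt; case: pselect => [h|h]; first exact: (proj2_sig (cid h)).
  by exfalso; apply: h; move: hy; rewrite inE => /asboolP.
pose tf y := if y \in W then pickt y y else ts y.
have Zun : forall t y, y \in Zunion G sigma t -> exists Z, absorbing G sigma t Z /\ y \in Z.
  by move=> t y; rewrite inE => /asboolP.
have Wcl : forall y z, y \in W -> Defs.trans G sigma tf y z != 0 -> z \in W.
  move=> y z hy hz; have [hm hZ] := pick_spec y hy.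
  have [Z [hab hyZ]] := Zun _ _ hZ.
  have e : Defs.trans G sigma tf y z = Defs.trans G sigma (pickt y) y z.
    by apply: trans_eq; rewrite /tf hy.
  rewrite e in hz; have hzZ := absorbing_closed hab hyZ hz.
  rewrite inE; apply/asboolP; exists (pickt y); split => //.
  by rewrite inE; apply/asboolP; exists Z.
have Wns : forall y, y \in W -> ~~ is_sink G y.
  move=> y hy; have [_ hZ] := pick_spec y hy.
  by have [Z [[h1 _] hyZ]] := Zun _ _ hZ; apply: h1.
have tf_min : min_strategy G tf.
  move=> y hy; rewrite /tf; case: ifP => h; first exact: (pick_spec y h).1 y hy.
  exact: hts_min.
have Wabs : absorbing G sigma tf W.
  split => // x hx; rewrite /hit_prob.
  have e : (fun n => (hit_within G sigma tf (~: W) n x : R^o)) = (fun _ => 0).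
    apply: funext => n; elim: n x hx => [|n IH] x hx /=; first by rewrite inE hx.
    rewrite inE hx /=; apply: big1 => z _.
    case: (eqVneq (Defs.trans G sigma tf x z) 0) => [->|hz]; first by rewrite mul0r.
    by rewrite IH ?mulr0 //; apply: Wcl hz.
  by rewrite e; exact: lim_cst.
exists tf; split.
  split => // tau' htau' x.
  have hb := @super_bound R V G sigma tf
    (fun y => if y \in W then 0 else Defs.value G sigma ts y).
  apply: le_trans (hb _ _ _ x) _.
  - by move=> z; case: ifP => _ //; exact: value_ge0.
  - move=> s hs; rewrite ifN; first exact: value_sink.
    by apply/negP => h; have := Wns s h; rewrite hs.
  - move=> y; case: ifPn => hy.
      rewrite /Top big1 // => z _.
      case: (eqVneq (Defs.trans G sigma tf y z) 0) => [->|hz]; first by rewrite mul0r.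
      by rewrite (Wcl y z hy hz) mulr0.
    apply: T_le_value; first by move=> z; apply: trans_eq; rewrite /tf (negbTE hy).
    by move=> z; case: ifP => _ //; exact: value_ge0.
  apply: le_trans (hts_opt tau' htau' x).
  by case: ifP => _ //; exact: value_ge0.
move=> tau' htau'; apply/fintype.subsetP => y hy.
have hyW : y \in W by rewrite inE; apply/asboolP; exists tau'.
by rewrite inE; apply/asboolP; exists W.
Qed.
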